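(* Let $X$ be a mixed-stable sequence with respect to a full BST $T$. If $GF$ serves $X$ starting with initial tree $T$, then it never restructures the tree: $T_t=T$ for every $t$.
   Context: Binary search tree model and $GF$. Keys are $\{1,\dots,n\}$ and $X=[x_1,\dots,x_m]$ is a query sequence. An algorithm serving $X$ holds a BST $T_{t-1}$ before serving $x_t$, searches $x_t$ from the root, and may then restructure by rotations into $T_t$. Greedy Future ($GF$). After finding $x_t$ in $T_{t-1}$, let $v_1<\dots<v_k$ be the keys on the root-to-$x_t$ path, set $v_0=-\infty$ and $v_{k+1}=+\infty$, and let $R_0,\dots,R_k$ be the subtrees hanging off this path. For each $i$, $\tau(v_i)$ is the smallest $s>t$ with $x_s\in(v_{i-1},v_{i+1})$, or $+\infty$ if there is none. $GF$ rearranges $v_1,\dots,v_k$ as a treap: a BST in key order and a heap in $\tau$, with the smallest $\tau$ at the top. Ties in $\tau$ are broken in favor of the node of smaller depth in $T_{t-1}$. It then reattaches $R_0,\dots,R_k$ unchanged at their unique positions, giving $T_t$. Stable sequences. Let $T$ be a full binary search tree (every inner node has exactly two children), and let $X$ be a query sequence consisting only of keys stored at leaves of $T$. For an inner node $v$, let $X_v$ be the subsequence of $X$ consisting of the queries to keys in the subtree of $v$. - The node $v$ is strongly-stable if consecutive queries of $X_v$ alternate between the left and right subtrees of $v$. - The node $v$ is weakly-stable with a left bias if its left child $u$ is an inner node and $X_v$ repeats cyclically (from some starting phase) the pattern: a query in the left subtree of $u$, then one in the right subtree of $u$, then one in the right subtree of $v$. - Weakly-stable with a right bias is the mirror image: $u$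 is the right child of $v$, and the pattern is right subtree of $u$, left subtree of $u$, left subtree of $v$. In both weakly-stable cases $u$ is called the favored child of $v$. $X$ (and $T$) is mixed-stable if every inner node of $T$ is strongly-stable or weakly-stable. *)

(* Defs.v *)
From mathcomp Require Import all_boot.
Set Implicit Arguments. Unset Strict Implicit. Unset Printing Implicit Defensive.

Inductive tree := Leaf | Node of tree & nat & tree.

Fixpoint inorder (T : tree) : seq nat :=
  if T is Node l k r then inorder l ++ k :: inorder r else [::].

Definition is_bst_on (n : nat) (T : tree) : Prop := inorder T = iota 1 n.

Definition is_empty (T : tree) : bool := if T is Leaf then true else false.

Definition is_inner (T : tree) : bool :=
  if T is Node l _ r then ~~ is_empty l || ~~ is_empty r else false.

Fixpoint full (T : tree) : bool :=
  if T is Node l _ r then (is_empty l == is_empty r) && full l && full r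
  else true.

Fixpoint leaf_keys (T : tree) : seq nat :=
  match T with
  | Leaf => [::]
  | Node Leaf k Leaf => [:: k]
  | Node l _ r => leaf_keys l ++ leaf_keys r
  end.

Fixpoint all_subtrees (P : tree -> Prop) (T : tree) : Prop :=
  match T with
  | Leaf => True
  | Node l _ r => P T /\ all_subtrees P l /\ all_subtrees P r
  end.

(* Stability notions.  X is 0-indexed.                                  *)
Definition subseq_at (X : seq nat) (v : tree) : seq nat :=
  [seq y <- X | y \in inorder v].

Definition strongly_stable (X : seq nat) (v : tree) : Prop :=
  match v with
  | Node l _ r =>
      let Xv := subseq_at X v in
      forall i, i.+1 < size Xv ->
        (nth 0 Xv i \in inorder l) != (nth 0 Xv i.+1 \in inorder l)
  | Leaf => False
  end.

Definition cyclic3 (cls : nat -> nat) (Xv : seq nat) : Prop :=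
  exists2 p, p < 3 & forall i, i < size Xv -> cls (nth 0 Xv i) = (p + i) %% 3.

Definition weakly_stable_left (X : seq nat) (v : tree) : Prop :=
  match v with
  | Node u _ r =>
      is_inner u /\
      match u with
      | Node ul _ ur =>
          cyclic3 (fun y => if y \in inorder ul then 0
                            else if y \in inorder ur then 1
                            else if y \in inorder r then 2 else 3)
                  (subseq_at X v)
      | Leaf => False
      end
  | Leaf => False
  end.

Definition weakly_stable_right (X : seq nat) (v : tree) : Prop :=
  match v with
  | Node l _ u =>
      is_inner u /\
      match u with
      | Node ul _ ur =>
          cyclic3 (fun y => if y \in inorder ur then 0
                            else if y \in inorder ul then 1
                            else if y \in inorder l then 2 else 3)
                  (subseq_at X v)
      | Leaf => False
      end
  | Leaf => False
  end.

Definition mixed_stable (X : seq nat) (T : tree) : Prop :=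
  all_subtrees (fun v => is_inner v ->
    strongly_stable X v \/ weakly_stable_left X v \/ weakly_stable_right X v) T.

(* Returns (R_0, [(v_1,d_1,R_1);
   ...; (v_k,d_k,R_k)]) : the keys v_1 < ... < v_k of the search path with
   their depths in T, and the subtrees hanging off the path, in key order. *)
Fixpoint collect (T : tree) (x d : nat) : tree * seq (nat * nat * tree) :=
  match T with
  | Leaf => (Leaf, [::])
  | Node l k r =>
      if x == k then (l, [:: (k, d, r)])
      else if x < k then
        let c := collect l x d.+1 in (c.1, rcons c.2 (k, d, r))
      else
        let c := collect r x d.+1 in (l, (k, d, c.1) :: c.2)
  end.

(* membership in the open interval (lo, hi); None stands for -oo / +oo *)
Definition in_open (lo hi : option nat) (y : nat) : bool :=
  (if lo is Some a then a < y else true) && (if hi is Some b then y < b else true).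

(* tau: smallest s > t with X[s] in (lo,hi); the value size X encodes +oo
   (every genuine index is < size X). *)
Definition tau (X : seq nat) (t : nat) (lo hi : option nat) : nat :=
  t.+1 + find (in_open lo hi) (drop t.+1 X).

Definition lexlt (a b : nat * nat) : bool :=
  (a.1 < b.1) || ((a.1 == b.1) && (a.2 < b.2)).

Fixpoint argmin_idx (s : seq (nat * nat)) : nat :=
  match s with
  | [::] => 0
  | a :: s' =>
      if s' is [::] then 0
      else let j := argmin_idx s' in
           if lexlt (nth a s' j) a then j.+1 else 0
  end.

(* treap construction: items are (priority, (key, R_i)), in key order,
   preceded by R_0; the smallest priority goes to the root. *)
Fixpoint build (fuel : nat) (R0 : tree)
    (ps : seq ((nat * nat) * (nat * tree))) : tree :=
  match fuel with
  | 0 => R0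
  | f.+1 =>
      match ps with
      | [::] => R0
      | _ =>
          let j := argmin_idx (map fst ps) in
          let q := nth ((0, 0), (0, Leaf)) ps j in
          Node (build f R0 (take j ps)) q.2.1 (build f q.2.2 (drop j.+1 ps))
      end
  end.

Definition gf_step (X : seq nat) (t : nat) (T : tree) : tree :=
  let x := nth 0 X t in
  let c := collect T x 0 in
  let R0 := c.1 in
  let ps := c.2 in
  let ks := map (fun e => e.1.1) ps in
  let item i :=
    let e := nth (0, 0, Leaf) ps i in
    let lo := if i is i'.+1 then Some (nth 0 ks i') else None in
    let hi := if i.+1 < size ks then Some (nth 0 ks i.+1) else None in
    ((tau X t lo hi, e.1.2), (e.1.1, e.2)) in
  build (size ps) R0 (map item (iota 0 (size ps))).

Fixpoint gf_tree (X : seq nat) (T : tree) (t : nat) : tree :=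
  if t is t'.+1 then gf_step X t' (gf_tree X T t') else T.

(* Main.v *)
Require Import Defs.
From mathcomp Require Import all_boot zify.
Set Implicit Arguments. Unset Strict Implicit. Unset Printing Implicit Defensive.

Lemma lexlt_asym a b : lexlt a b -> ~~ lexlt b a.
Proof. case: a b => [a1 a2] [b1 b2]; rewrite /lexlt /=; lia. Qed.

Lemma argmin_lt s : s != [::] -> argmin_idx s < size s.
Proof.
elim: s => [//|a s IH] _ /=.
case: s IH => [//|b s] IH.
case: ifP => // _; have := IH isT; simpl; lia.
Qed.

Lemma argmin_spec s i : i < size s ->
  (forall j, j < size s -> j != i -> lexlt (nth (0,0) s i) (nth (0,0) s j)) ->
  argmin_idx s = i.
Proof.
elim: s i => [//|a s IH] i Hi H /=.
case: s IH Hi H => [|b s] IH Hi H; first by case: i Hi H.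
set s' := b :: s.
have Hs : argmin_idx s' < size s' by apply: argmin_lt.
case: i Hi H => [|i] Hi H.
  have := H (argmin_idx s').+1 Hs isT => /=.
  rewrite (set_nth_default (0,0) a Hs) => /lexlt_asym /negbTE -> //.
have -> : argmin_idx s' = i.
  apply: IH => // j Hj Hji; exact: (H j.+1 Hj Hji).
have Hi' : i < size s' by [].
rewrite (set_nth_default (0,0) a Hi').
have := H 0 isT isT => /= -> //.
Qed.

Lemma In_nth T (x0 : T) s i : i < size s -> List.In (nth x0 s i) s.
Proof. elim: s i => [//|a s IH] [|i] Hi /=; [by left | right; exact: IH]. Qed.

Lemma build_cons f R q qs : build f.+1 R (q :: qs) =
  Node (build f R (take (argmin_idx (map fst (q :: qs))) (q :: qs)))
       (nth ((0, 0), (0, Leaf)) (q :: qs) (argmin_idx (map fst (q :: qs)))).2.1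
       (build f (nth ((0, 0), (0, Leaf)) (q :: qs) (argmin_idx (map fst (q :: qs)))).2.2
          (drop (argmin_idx (map fst (q :: qs))).+1 (q :: qs))).
Proof. by []. Qed.

Lemma build_nil f R : build f R [::] = R.
Proof. by case: f. Qed.

Lemma collect_depth T x d e : List.In e (collect T x d).2 -> d <= e.1.2.
Proof.
elim: T d => [|l IHl k r IHr] d //=.
case: ifP => _; first by case=> // <-.
case: ifP => _ /=.
  rewrite -cats1 List.in_app_iff => -[/IHl|[<-|//]] //=; lia.
case=> [<-//|/IHr] /=; lia.
Qed.

Definition qsok (ps : seq (nat * nat * tree)) (qs : seq ((nat*nat) * (nat*tree))) :=
  [/\ size qs = size ps,
      forall i, i < size ps -> (nth ((0,0),(0,Leaf)) qs i).2 =
                   ((nth (0,0,Leaf) ps i).1.1, (nth (0,0,Leaf) ps i).2)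
    & forall i j, i < size ps -> j < size ps ->
        (nth (0,0,Leaf) ps i).1.2 < (nth (0,0,Leaf) ps j).1.2 ->
        lexlt (nth ((0,0),(0,Leaf)) qs i).1 (nth ((0,0),(0,Leaf)) qs j).1].

Lemma nth_fst (qs : seq ((nat*nat) * (nat*tree))) i : i < size qs ->
  nth (0,0) (map fst qs) i = (nth ((0,0),(0,Leaf)) qs i).1.
Proof. by move=> H; rewrite (nth_map ((0,0),(0,Leaf))). Qed.

Lemma build_collect T x d f qs :
  size (collect T x d).2 <= f -> qsok (collect T x d).2 qs ->
  build f (collect T x d).1 qs = T.
Proof.
elim: T x d f qs => [|l IHl k r IHr] x d f qs.
  by move=> _ [/= /size0nil -> _ _]; rewrite build_nil.
rewrite /=.
case: ifP => Hxk.
  case: f => [//|f] _ [Hs Hnth Hmono].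
  case: qs Hs Hnth Hmono => [//|q [|//]] _ Hnth _ /=.
  have := Hnth 0 isT => /= ->. by rewrite !build_nil.
case: ifP => Hxl.
  set c := collect l x d.+1.
  rewrite size_rcons => Hf [Hs Hnth Hmono].
  case: f Hf => [//|f] Hf.
  case: qs Hs Hnth Hmono => [|q0 qs'] Hs Hnth Hmono; first by rewrite size_rcons in Hs.
  set qs := q0 :: qs'.
  rewrite build_cons -/qs.
  rewrite size_rcons in Hs.
  have Ham : argmin_idx (map fst qs) = size c.2.
    apply: argmin_spec; first by rewrite size_map Hs.
    move=> j; rewrite size_map Hs ltnS => Hj Hji.
    have Hj' : j < size c.2 by rewrite ltn_neqAle Hji.
    rewrite !nth_fst ?Hs //; apply: Hmono; rewrite ?size_rcons //.
    rewrite !nth_rcons ltnn eqxx Hj' /=.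
    have /collect_depth : List.In (nth (0,0,Leaf) c.2 j) c.2 by apply: In_nth.
    lia.
  rewrite Ham.
  have Hq := Hnth (size c.2); rewrite size_rcons nth_rcons ltnn eqxx in Hq.
  rewrite (Hq (ltnSn _)) /=.
  have -> : drop (size c.2) qs' = [::] by apply: drop_oversize; move: Hs => /= [->].
  rewrite build_nil IHl //.
  split; first by rewrite size_take Hs ltnSn.
  - move=> i Hi; rewrite nth_take // Hnth; last by rewrite size_rcons ltnS ltnW.
    by rewrite nth_rcons Hi.
  - move=> i j Hi Hj; rewrite !nth_take // => Hd; rewrite -/c in Hi Hj Hd.
    apply: Hmono; rewrite /= ?size_rcons ?ltnS; [exact: ltnW | exact: ltnW | by rewrite !nth_rcons Hi Hj].
set c := collect r x d.+1.
rewrite /= => Hf [Hs Hnth Hmono].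
case: f Hf => [//|f] Hf.
case: qs Hs Hnth Hmono => [//|q0 qs'] Hs Hnth Hmono.
set qs := q0 :: qs'.
rewrite build_cons -/qs.
have Ham : argmin_idx (map fst qs) = 0.
  apply: argmin_spec; first by rewrite size_map Hs.
  move=> j; rewrite size_map Hs => Hj Hj0.
  rewrite !nth_fst ?Hs //; apply: Hmono => //=.
  case: j Hj Hj0 => [//|j] /= Hj _.
  have /collect_depth : List.In (nth (0,0,Leaf) c.2 j) c.2 by apply: In_nth.
  lia.
rewrite Ham.
have Hq := Hnth 0 isT; rewrite /= in Hq.
rewrite Hq /= build_nil drop0.
rewrite IHr //.
split; first by move: Hs => /= [].
- by move=> i Hi; have := Hnth i.+1 Hi.
- move=> i j Hi Hj Hd; exact: (Hmono i.+1 j.+1).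
Qed.

Fixpoint pnodes (T : tree) (x d : nat) : seq ((nat * nat) * tree) :=
  match T with
  | Leaf => [::]
  | Node l k r =>
      if x == k then [:: ((k, d), T)]
      else if x < k then rcons (pnodes l x d.+1) ((k, d), T)
      else ((k, d), T) :: pnodes r x d.+1
  end.

Definition pkeys T x d := map (fun e => e.1.1) (pnodes T x d).

Lemma pnodes_collect T x d : map fst (pnodes T x d) = map fst (collect T x d).2.
Proof.
elim: T d => [|l IHl k r IHr] d //=.
case: ifP => // _; case: ifP => _ /=; last by rewrite IHr.
by rewrite !map_rcons IHl.
Qed.

Lemma pn_in T x d e : List.In e (pnodes T x d) ->
  [/\ e.1.1 \in inorder T, {subset inorder e.2 <= inorder T} & d <= e.1.2].
Proof.
elim: T d => [|l IHl k r IHr] d //=.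
have Hk : k \in inorder l ++ k :: inorder r by rewrite mem_cat in_cons eqxx orbT.
have Hself : [/\ k \in inorder (Node l k r), {subset inorder (Node l k r) <= inorder (Node l k r)} & d <= d].
  by split.
case: ifP => _; first by case=> [<-|//].
case: ifP => _.
  rewrite -cats1 List.in_app_iff => -[/IHl [H1 H2 H3]|[<-|//]] //=.
  split; first by rewrite mem_cat H1.
    by move=> y /H2 Hy; rewrite mem_cat Hy.
  lia.
case=> [<-//|/IHr [H1 H2 H3]] /=.
split; first by rewrite mem_cat in_cons H1 !orbT.
  by move=> y /H2 Hy; rewrite mem_cat in_cons Hy !orbT.
lia.
Qed.

Lemma pkeys_in T x d i : i < size (pnodes T x d) -> nth 0 (pkeys T x d) i \in inorder T.
Proof.
move=> Hi; rewrite /pkeys (nth_map ((0,0),Leaf)) //.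
by case: (pn_in (In_nth ((0,0),Leaf) Hi)).
Qed.

Lemma pw_node l k r : pairwise ltn (inorder (Node l k r)) ->
  [/\ pairwise ltn (inorder l), pairwise ltn (inorder r),
      forall y, y \in inorder l -> y < k & forall y, y \in inorder r -> k < y].
Proof.
rewrite /= pairwise_cat pairwise_cons allrel_consr => /and3P [/andP [Hl _] Hpl /andP[Hk Hpr]].
by split => // y Hy; [move/allP: Hl => /(_ y Hy) | move/allP: Hk => /(_ y Hy)].
Qed.

Definition lo_loc (L : option nat) (ks : seq nat) i :=
  if i is i'.+1 then Some (nth 0 ks i') else L.
Definition hi_loc (H : option nat) (ks : seq nat) i :=
  if i.+1 < size ks then Some (nth 0 ks i.+1) else H.

Lemma lo_loc_rcons L ks a i : i <= size ks -> lo_loc L (rcons ks a) i = lo_loc L ks i.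
Proof. case: i => [//|i] /= Hi; by rewrite nth_rcons Hi. Qed.

Lemma hi_loc_rcons H ks a i : i < size ks -> hi_loc H (rcons ks a) i = hi_loc (Some a) ks i.
Proof.
move=> Hi; rewrite /hi_loc size_rcons nth_rcons ltnS Hi.
case: ltnP => H' //. have E : i.+1 = size ks by lia. by rewrite E eqxx.
Qed.

Definition entry_ok (U : pred nat) (x : nat) (lo hi : option nat) (S : tree) : Prop :=
  match S with
  | Leaf => False
  | Node l k r =>
    [/\ pairwise ltn (inorder S), x \in inorder S,
        (forall y, U y -> in_open lo hi y -> y \in inorder S),
        (x < k -> (forall y, (y == k) || (y \in inorder r) -> in_open lo hi y) /\
                  (if l is Node ul u ur then x < u -> forall y, y \in inorder ur -> in_open lo hi y
                   else True))
      & (k < x -> (forall y, (y == k) || (y \in inorder l) -> in_open lo hi y) /\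
                  (if r is Node rl u rr then u < x -> forall y, y \in inorder rl -> in_open lo hi y
                   else True))]
  end.

Lemma in_openP lo hi y : in_open lo hi y =
  (if lo is Some a then a < y else true) && (if hi is Some b then y < b else true).
Proof. by []. Qed.

Lemma lo_trans L H0 H a y : in_open L H0 a -> in_open (Some a) H y -> in_open L H y.
Proof. by rewrite !in_openP; case: L => [?|]; case: H0 => [?|]; case: H => [?|] /=; lia. Qed.
Lemma hi_trans L H0 H b y : in_open H0 H b -> in_open L (Some b) y -> in_open L H y.
Proof. by rewrite !in_openP; case: L => [?|]; case: H0 => [?|]; case: H => [?|] /=; lia. Qed.
Lemma lo_tight L H a y : in_open L H y -> a < y -> in_open (Some a) H y.
Proof. by rewrite !in_openP; case: L => [?|]; case: H => [?|] /=; lia. Qed.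
Lemma hi_tight L H b y : in_open L H y -> y < b -> in_open L (Some b) y.
Proof. by rewrite !in_openP; case: L => [?|]; case: H => [?|] /=; lia. Qed.
Lemma in_open_lt L b y : in_open L (Some b) y -> y < b.
Proof. by rewrite in_openP; case: L => [?|] /=; lia. Qed.
Lemma in_open_gt H a y : in_open (Some a) H y -> a < y.
Proof. by rewrite in_openP; case: H => [?|] /=; lia. Qed.

Lemma size_pkeys T x d : size (pkeys T x d) = size (pnodes T x d).
Proof. exact: size_map. Qed.

Lemma crux (U : pred nat) x T L H d :
  pairwise ltn (inorder T) -> all (in_open L H) (inorder T) ->
  (forall y, U y -> in_open L H y -> y \in inorder T) -> x \in inorder T ->
  forall i, i < size (pnodes T x d) ->
  entry_ok U x (lo_loc L (pkeys T x d) i) (hi_loc H (pkeys T x d) i)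
           (nth ((0,0),Leaf) (pnodes T x d) i).2.
Proof.
elim: T L H d => [|l IHl k r IHr] L H d //.
move=> Hpw Hb HU Hx.
have [Hpl Hpr Hlk Hkr] := pw_node Hpw.
have HbT : forall y, y \in inorder (Node l k r) -> in_open L H y.
  by move=> y; move/allP: Hb => /(_ y).
have HTl : forall y, y \in inorder l -> y \in inorder (Node l k r).
  by move=> y Hy; rewrite /= mem_cat Hy.
have HTr : forall y, y \in inorder r -> y \in inorder (Node l k r).
  by move=> y Hy; rewrite /= mem_cat in_cons Hy !orbT.
have HTk : k \in inorder (Node l k r) by rewrite /= mem_cat in_cons eqxx orbT.
have Hbk : in_open L H k by apply: HbT.
have Hcls : forall y, y \in inorder (Node l k r) ->
    [\/ y \in inorder l, y == k | y \in inorder r].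
  by move=> y; rewrite /= mem_cat in_cons => /or3P.
case: (ltngtP x k) => Hxk.
- have Hxl : x \in inorder l.
    by case/Hcls: Hx => // [/eqP E | /Hkr]; lia.
  have Epn : pnodes (Node l k r) x d = rcons (pnodes l x d.+1) ((k, d), Node l k r).
    by rewrite /= ifF ?Hxk //; apply/negbTE; rewrite neq_ltn Hxk.
  have Epk : pkeys (Node l k r) x d = rcons (pkeys l x d.+1) k.
    by rewrite /pkeys Epn map_rcons.
  have Hb' : all (in_open L (Some k)) (inorder l).
    by apply/allP => y Hy; apply: hi_tight (HbT y (HTl y Hy)) (Hlk y Hy).
  have HU' : forall y, U y -> in_open L (Some k) y -> y \in inorder l.
    move=> y Uy Hy; have := HU y Uy (hi_trans Hbk Hy).
    have Hyk := in_open_lt Hy.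
    case/Hcls => [//|/eqP E|/Hkr Hky]; exfalso; lia.
  have IH := IHl L (Some k) d.+1 Hpl Hb' HU' Hxl.
  rewrite Epn Epk size_rcons => i; rewrite ltnS leq_eqVlt => /orP[/eqP -> | Hi].
  + rewrite nth_rcons ltnn eqxx -size_pkeys lo_loc_rcons // /hi_loc size_rcons ltnn /=.
    set ks := pkeys l x d.+1.
    set lo := lo_loc L ks (size ks).
    have HL : (forall y, in_open lo H y -> in_open L H y) /\
              (forall y, k <= y -> in_open L H y -> in_open lo H y).
      rewrite /lo /lo_loc; case E: (size ks) => [|s]; first by [].
      have Ha : nth 0 ks s \in inorder l by apply: pkeys_in; rewrite -size_pkeys E.
      split => y Hy; first exact: lo_trans (HbT _ (HTl _ Ha)) Hy.
      move=> Hy'; apply: lo_tight Hy' _; exact: leq_trans (Hlk _ Ha) Hy.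
    case: HL => HL1 HL2.
    split => //.
    * by move=> y Uy /HL1 Hy; exact: HU y Uy Hy.
    * move=> _; split.
        move=> y /orP [/eqP -> | Hy]; first by apply: HL2.
        by apply: HL2 (HbT _ (HTr _ Hy)); exact: ltnW (Hkr y Hy).
      case El: l => [//|ul u ur] Hxu y Hy.
      have [_ _ _ Hur] := pw_node (eq_ind _ (fun t => pairwise ltn (inorder t)) Hpl _ El).
      have Eks : ks = rcons (pkeys ul x d.+2) u.
        by rewrite /ks El /pkeys /= ifF ?Hxu ?map_rcons //; apply/negbTE; rewrite neq_ltn Hxu.
      rewrite /lo Eks size_rcons /= nth_rcons ltnn eqxx.
      apply: lo_tight (Hur y Hy).
      apply: HbT; apply: HTl; by rewrite El /= mem_cat in_cons Hy !orbT.
    * move=> Hc; exfalso; move: Hc Hxk; clear; lia.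
  + rewrite nth_rcons Hi lo_loc_rcons ?size_pkeys 1?ltnW // hi_loc_rcons ?size_pkeys //.
    exact: IH.
- have Hxr : x \in inorder r.
    by case/Hcls: Hx => // [/Hlk | /eqP E]; lia.
  have Epn : pnodes (Node l k r) x d = ((k, d), Node l k r) :: pnodes r x d.+1.
    have E1 : (x == k) = false by lia.
    have E2 : (x < k) = false by lia.
    by rewrite /= E1 E2.
  have Epk : pkeys (Node l k r) x d = k :: pkeys r x d.+1.
    by rewrite /pkeys Epn.
  have Hb' : all (in_open (Some k) H) (inorder r).
    by apply/allP => y Hy; apply: lo_tight (HbT y (HTr y Hy)) (Hkr y Hy).
  have HU' : forall y, U y -> in_open (Some k) H y -> y \in inorder r.
    move=> y Uy Hy; have := HU y Uy (lo_trans Hbk Hy).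
    have Hyk := in_open_gt Hy.
    case/Hcls => [/Hlk Hky|/eqP E|//]; exfalso; lia.
  have IH := IHr (Some k) H d.+1 Hpr Hb' HU' Hxr.
  rewrite Epn Epk => -[|i] Hi.
  + rewrite /= /hi_loc /= ltnS.
    set ks := pkeys r x d.+1.
    set hi := if 0 < size ks then Some (nth 0 ks 0) else H.
    have HR : (forall y, in_open L hi y -> in_open L H y) /\
              (forall y, y <= k -> in_open L H y -> in_open L hi y).
      rewrite /hi; case E: (size ks) => [|s]; first by [].
      have Ha : nth 0 ks 0 \in inorder r by apply: pkeys_in; rewrite -size_pkeys E.
      split => y Hy; first exact: hi_trans (HbT _ (HTr _ Ha)) Hy.
      move=> Hy'; apply: hi_tight Hy' _; exact: leq_ltn_trans Hy (Hkr _ Ha).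
    case: HR => HR1 HR2.
    split => //.
    * by move=> y Uy /HR1 Hy; exact: HU y Uy Hy.
    * move=> Hc; exfalso; move: Hc Hxk; clear; lia.
    * move=> _; split.
        move=> y /orP [/eqP -> | Hy]; first by apply: HR2.
        by apply: HR2 (HbT _ (HTl _ Hy)); exact: ltnW (Hlk y Hy).
      case Er: r => [//|rl u rr] Hux y Hy.
      have [_ _ Hrl _] := pw_node (eq_ind _ (fun t => pairwise ltn (inorder t)) Hpr _ Er).
      have Eks : ks = u :: pkeys rr x d.+2.
        have E1 : (x == u) = false by lia.
        have E2 : (x < u) = false by lia.
        by rewrite /ks Er /pkeys /= E1 E2.
      rewrite /hi Eks /=.
      apply: hi_tight (Hrl y Hy).
      apply: HbT; apply: HTr; by rewrite Er /= mem_cat Hy.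
  + have -> : lo_loc L (k :: pkeys r x d.+1) i.+1 = lo_loc (Some k) (pkeys r x d.+1) i.
      by case: i {Hi}.
    exact: IH.
- have Epn : pnodes (Node l k r) x d = [:: ((k, d), Node l k r)] by rewrite /= Hxk eqxx.
  rewrite Epn /pkeys Epn => -[|//] _ /=.
  rewrite /hi_loc /=.
  split => //; [move=> Hc; exfalso; move: Hc Hxk; clear; lia | move=> Hc; exfalso; move: Hc Hxk; clear; lia].
Qed.

Lemma pn_desc T x d e1 e2 : List.In e1 (pnodes T x d) -> List.In e2 (pnodes T x d) ->
  e1.1.2 < e2.1.2 ->
  {subset inorder e2.2 <= inorder e1.2} /\
  (if e1.2 is Node _ k _ then x != k else False).
Proof.
elim: T d => [|l IHl k r IHr] d //=.
case: ifP => Hxk; first by case=> [<-|//] [<-|//] /=; rewrite ltnn.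
case: ifP => Hxl.
  rewrite -!cats1 !List.in_app_iff.
  case=> [H1|[<-|//]]; case=> [H2|[<-|//]].
  - exact: (IHl d.+1 H1 H2).
  - by case: (pn_in H1) => _ _ /=; lia.
  - move=> _; split; last by rewrite /= Hxk.
    by case: (pn_in H2) => _ Hs _ y /Hs Hy /=; rewrite mem_cat Hy.
  - by rewrite ltnn.
case=> [<-|H1]; case=> [<-|H2].
- by rewrite ltnn.
- move=> _; split; last by rewrite /= Hxk.
  by case: (pn_in H2) => _ Hs _ y /Hs Hy /=; rewrite mem_cat in_cons Hy !orbT.
- by case: (pn_in H1) => _ _ /=; lia.
- exact: (IHr d.+1 H1 H2).
Qed.

Lemma pn_sub (P : tree -> Prop) T x d e : all_subtrees P T -> List.In e (pnodes T x d) -> P e.2.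
Proof.
elim: T d => [|l IHl k r IHr] d //= [HT [Hl Hr]].
case: ifP => _; first by case=> [<-|//].
case: ifP => _.
  by rewrite -cats1 List.in_app_iff => -[/IHl|[<-|//]]; [apply|].
by case=> [<-//|/IHr]; apply.
Qed.

Lemma leaf_in T : {subset leaf_keys T <= inorder T}.
Proof.
elim: T => [|l IHl k r IHr] //= y.
have Hgen : y \in leaf_keys l ++ leaf_keys r -> y \in inorder l ++ k :: inorder r.
  by rewrite !mem_cat in_cons => /orP [/IHl -> | /IHr ->] //; rewrite !orbT.
case: l IHl Hgen => [|ll lk lr] IHl Hgen; case: r IHr Hgen => [|rl rk rr] IHr Hgen //.
Qed.

Lemma filter_find (a : pred nat) s : has a s ->
  filter a s = nth 0 s (find a s) :: filter a (drop (find a s).+1 s).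
Proof.
elim: s => [//|b s IH] /=.
case Hb: (a b) => /= H; first by rewrite drop0.
by rewrite IH.
Qed.

Lemma next_lemma X t (a : pred nat) : t < size X -> a (nth 0 X t) -> has a (drop t.+1 X) ->
  exists m, [/\ m.+1 < size (filter a X), nth 0 (filter a X) m = nth 0 X t
            & nth 0 (filter a X) m.+1 = nth 0 (drop t.+1 X) (find a (drop t.+1 X))].
Proof.
move=> Ht Hx Hh.
have EX : X = take t X ++ nth 0 X t :: drop t.+1 X by rewrite -drop_nth // cat_take_drop.
have -> : filter a X = filter a (take t X) ++
    nth 0 X t :: (nth 0 (drop t.+1 X) (find a (drop t.+1 X)) ::
                  filter a (drop (find a (drop t.+1 X)).+1 (drop t.+1 X))).
  by rewrite {1}EX filter_cat /= Hx (filter_find Hh).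
exists (size (filter a (take t X))).
rewrite size_cat /= !nth_cat ltnn subnn.
set m := size (filter a (take t X)).
have -> : (m.+1 < m) = false by lia.
rewrite /= subSnn.
split => //; rewrite addnS ltnS addnS ltnS; exact: leq_addr.
Qed.

Lemma find_le (p q r : pred nat) s : (forall y, y \in s -> q y -> r y) ->
  (has r s -> p (nth 0 s (find r s))) -> find p s <= find q s.
Proof.
move=> Hqr Hp.
case Hq: (has q s); last by rewrite (hasNfind (negbT Hq)) find_size.
have Hqn := nth_find 0 Hq.
have Hj : find q s < size s by rewrite -has_find.
have Hr : r (nth 0 s (find q s)) by apply: Hqr (mem_nth 0 Hj) Hqn.
have Hrs : has r s by apply/hasP; exists (nth 0 s (find q s)) => //; exact: mem_nth.
have Hrle : find r s <= find q s.
  by rewrite leqNgt; apply/negP => /(before_find 0); rewrite Hr.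
apply: leq_trans Hrle.
by rewrite leqNgt; apply/negP => /(before_find 0); rewrite (Hp Hrs).
Qed.

Lemma cyc_next cls (Xv : seq nat) m : cyclic3 cls Xv -> m.+1 < size Xv ->
  cls (nth 0 Xv m) < 3 /\ cls (nth 0 Xv m.+1) = (cls (nth 0 Xv m)).+1 %% 3.
Proof.
move=> [p Hp H] Hm.
rewrite (H m) ?(ltnW Hm) // (H m.+1) //.
split; first by rewrite ltn_mod.
rewrite addnS -addn1 -(addn1 ((p + m) %% 3)) modnDml //.
Qed.

Definition cl3 (A B C : seq nat) z := if z \in A then 0 else if z \in B then 1 else if z \in C then 2 else 3.

Lemma cl3P A B C z : [/\ cl3 A B C z = 0 -> z \in A, cl3 A B C z = 1 -> z \in B
                      & cl3 A B C z = 2 -> z \in C].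
Proof. by rewrite /cl3; case: ifP => //; case: ifP => //; case: ifP. Qed.

Lemma ne_empty z t : z \in inorder t -> ~~ is_empty t.
Proof. by case: t. Qed.

Lemma next_ok X t (U : pred nat) lo hi S :
  t < size X -> entry_ok U (nth 0 X t) lo hi S ->
  (if S is Node _ k _ then nth 0 X t != k else False) ->
  (is_inner S -> strongly_stable X S \/ weakly_stable_left X S \/ weakly_stable_right X S) ->
  has (fun y => y \in inorder S) (drop t.+1 X) ->
  in_open lo hi (nth 0 (drop t.+1 X) (find (fun y => y \in inorder S) (drop t.+1 X))).
Proof.
case: S => [//|l k r] Ht [Hpw Hx HU Hlt Hgt] Hxk Hst Hh.
set a := (fun y => y \in inorder (Node l k r)) in Hh *.
have [m [Hm Hmx Hmy]] := next_lemma (a := a) Ht Hx Hh.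
move: Hmx Hmy Hx Hxk Hlt Hgt Hh.
set x := nth 0 X t; set D := drop t.+1 X; set y := nth 0 D (find a D).
move=> Hmx Hmy Hx Hxk Hlt Hgt Hh.
have Hy : y \in inorder (Node l k r) := nth_find 0 Hh.
have [Hpl Hpr Hlk Hkr] := pw_node Hpw.
have Hcls : forall z, z \in inorder (Node l k r) ->
    [\/ z \in inorder l, z == k | z \in inorder r].
  by move=> z; rewrite /= mem_cat in_cons => /or3P.
have Hinner : is_inner (Node l k r).
  rewrite /=; case/Hcls: Hx => [/ne_empty -> // | /eqP E | /ne_empty ->]; last by rewrite orbT.
  by rewrite E eqxx in Hxk.
have ES : subseq_at X (Node l k r) = filter a X by [].
have HxL : x < k -> x \in inorder l.
  by move=> H; case/Hcls: Hx => // [/eqP E | /Hkr Hk]; exfalso; lia.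
have HxR : k < x -> x \in inorder r.
  by move=> H; case/Hcls: Hx => // [/Hlk Hk | /eqP E]; exfalso; lia.
have Hxkk : x < k \/ k < x.
  by move: Hxk; case: ltngtP => // _ _; [left|right].
case: (Hst Hinner) => [Hs | [Hw | Hw]].
- have := Hs m; rewrite ES Hmx Hmy => /(_ Hm).
  case: Hxkk => H.
    rewrite (HxL H) /= => Hyl.
    apply: (Hlt H).1.
    by case/Hcls: Hy => [Hy|->|->]; rewrite ?orbT //; rewrite Hy in Hyl.
  have Hxl : x \in inorder l = false.
    by apply/negP => /Hlk; lia.
  rewrite Hxl /= => Hyl.
  have Hyl' : y \in inorder l by move: Hyl; case: (y \in inorder l).
  by apply: (Hgt H).1; rewrite Hyl' orbT.
- move: Hw; rewrite /weakly_stable_left.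
  case El: l => [|ul uk ur] [_ //] Hcyc.
  subst l.
  have [_ _ Hul Hur] := pw_node Hpl.
  have [Hc1 Hc2] : cl3 (inorder ul) (inorder ur) (inorder r) x < 3 /\
      cl3 (inorder ul) (inorder ur) (inorder r) y =
      (cl3 (inorder ul) (inorder ur) (inorder r) x).+1 %% 3.
    rewrite -Hmx -Hmy; exact: (cyc_next Hcyc Hm).
  have [X0 X1 X2] := cl3P (inorder ul) (inorder ur) (inorder r) x.
  have [Y0 Y1 Y2] := cl3P (inorder ul) (inorder ur) (inorder r) y.
  have Hin1 : forall z, z \in inorder ul -> z \in inorder (Node ul uk ur).
    by move=> z Hz; rewrite /= mem_cat Hz.
  have Hin2 : forall z, z \in inorder ur -> z \in inorder (Node ul uk ur).
    by move=> z Hz; rewrite /= mem_cat in_cons Hz !orbT.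
  move: Hc1 Hc2 X0 X1 X2.
  case: (cl3 (inorder ul) (inorder ur) (inorder r) x) => [|[|[|c]]] // _ /= Hc2 X0 X1 X2.
  + have Hx0 := X0 erefl.
    have Hxk' : x < k by apply: Hlk; exact: Hin1.
    apply: (Hlt Hxk').2; first exact: Hul.
    exact: Y1.
  + have Hx1 := X1 erefl.
    have Hxk' : x < k by apply: Hlk; exact: Hin2.
    by apply: (Hlt Hxk').1; rewrite Y2 ?orbT.
  + have Hx2 := X2 erefl.
    apply: (Hgt (Hkr _ Hx2)).1.
    by rewrite Hin1 ?orbT // Y0.
- move: Hw; rewrite /weakly_stable_right.
  case Er: r => [|rl uk rr] [_ //] Hcyc.
  subst r.
  have [_ _ Hrl Hrr] := pw_node Hpr.
  have [Hc1 Hc2] : cl3 (inorder rr) (inorder rl) (inorder l) x < 3 /\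
      cl3 (inorder rr) (inorder rl) (inorder l) y =
      (cl3 (inorder rr) (inorder rl) (inorder l) x).+1 %% 3.
    rewrite -Hmx -Hmy; exact: (cyc_next Hcyc Hm).
  have [X0 X1 X2] := cl3P (inorder rr) (inorder rl) (inorder l) x.
  have [Y0 Y1 Y2] := cl3P (inorder rr) (inorder rl) (inorder l) y.
  have Hin1 : forall z, z \in inorder rl -> z \in inorder (Node rl uk rr).
    by move=> z Hz; rewrite /= mem_cat Hz.
  have Hin2 : forall z, z \in inorder rr -> z \in inorder (Node rl uk rr).
    by move=> z Hz; rewrite /= mem_cat in_cons Hz !orbT.
  move: Hc1 Hc2 X0 X1 X2.
  case: (cl3 (inorder rr) (inorder rl) (inorder l) x) => [|[|[|c]]] // _ /= Hc2 X0 X1 X2.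
  + have Hx0 := X0 erefl.
    have Hxk' : k < x by apply: Hkr; exact: Hin2.
    apply: (Hgt Hxk').2; first exact: Hrr.
    exact: Y1.
  + have Hx1 := X1 erefl.
    have Hxk' : k < x by apply: Hkr; exact: Hin1.
    by apply: (Hgt Hxk').1; rewrite Y2 ?orbT.
  + have Hx2 := X2 erefl.
    apply: (Hlt (Hlk _ Hx2)).1.
    by rewrite Hin2 ?orbT // Y0.
Qed.

Lemma gf_step_id n T X t : is_bst_on n T -> (forall x, x \in X -> x \in leaf_keys T) ->
  mixed_stable X T -> t < size X -> gf_step X t T = T.
Proof.
move=> Hbst Hleaf Hms Ht.
have HXT : forall y, y \in X -> y \in inorder T by move=> y /Hleaf /leaf_in.
have Hpw : pairwise ltn (inorder T).
  by rewrite Hbst -sorted_pairwise ?iota_ltn_sorted //; exact: ltn_trans.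
set x := nth 0 X t.
have Hx : x \in inorder T by apply: HXT; exact: mem_nth.
have Hall : all (in_open None None) (inorder T) by apply/allP.
have HU : forall y, (fun y => y \in X) y -> in_open None None y -> y \in inorder T.
  by move=> y Hy _; exact: HXT.
have Hcr := crux (d := 0) Hpw Hall HU Hx.
have Epn := pnodes_collect T x 0.
have Esz : size (pnodes T x 0) = size (collect T x 0).2.
  by rewrite -(size_map fst) Epn size_map.
have Ekeys : map (fun e => e.1.1) (collect T x 0).2 = pkeys T x 0.
  by rewrite /pkeys !(map_comp fst fst) Epn.
have Edep : forall i, i < size (collect T x 0).2 ->
    (nth (0,0,Leaf) (collect T x 0).2 i).1 = (nth ((0,0),Leaf) (pnodes T x 0) i).1.
  by move=> i Hi; rewrite -!(nth_map _ (0,0) fst) ?Esz // Epn.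
rewrite /gf_step -/x.
apply: build_collect => //.
split; first by rewrite size_map size_iota.
- by move=> i Hi; rewrite (nth_map 0) ?size_iota // nth_iota.
- move=> i j Hi Hj Hd.
  rewrite !(nth_map 0) ?size_iota // !nth_iota //= Ekeys.
  have Hi' : i < size (pnodes T x 0) by rewrite Esz.
  have Hj' : j < size (pnodes T x 0) by rewrite Esz.
  have Hd' : (nth ((0,0),Leaf) (pnodes T x 0) i).1.2 < (nth ((0,0),Leaf) (pnodes T x 0) j).1.2.
    by rewrite -Edep // -Edep.
  suff Htau : tau X t (lo_loc None (pkeys T x 0) i) (hi_loc None (pkeys T x 0) i) <=
              tau X t (lo_loc None (pkeys T x 0) j) (hi_loc None (pkeys T x 0) j).
    move: Htau Hd; rewrite /lexlt /lo_loc /hi_loc /= !add0n; lia.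
  rewrite /tau leq_add2l.
  have [Hsub Hxk] := pn_desc (In_nth ((0,0),Leaf) Hi') (In_nth ((0,0),Leaf) Hj') Hd'.
  have Ei := Hcr i Hi'; have Ej := Hcr j Hj'.
  have Hst := pn_sub Hms (In_nth ((0,0),Leaf) Hi').
  apply: (find_le (r := fun y => y \in inorder (nth ((0,0),Leaf) (pnodes T x 0) i).2)).
  + move=> y Hy Hop.
    move: Ej Hsub; case: (nth ((0,0),Leaf) (pnodes T x 0) j).2 => [//|l k r] [_ _ HUj _ _] Hsub.
    apply: Hsub; apply: HUj => //; exact: mem_drop Hy.
  + by move=> Hh; apply: (next_ok Ht Ei Hxk Hst Hh).
Qed.

Theorem lemma2 (n : nat) (T : tree) (X : seq nat) :
  is_bst_on n T ->
  full T ->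
  (forall x, x \in X -> x \in leaf_keys T) ->
  mixed_stable X T ->
  forall t, t <= size X -> gf_tree X T t = T.
Proof.
move=> Hbst _ Hleaf Hms; elim => [//|t IH] Ht /=.
rewrite IH ?(ltnW Ht) //; exact: gf_step_id Hbst Hleaf Hms Ht.
Qed.
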